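(* Consider the model $y_{it}=x_{it}'\theta^0_{k_i^0}+\varepsilon_{it}$ described in the context and suppose Assumptions 1 and 2 (stated in the context) hold. Then for $\eta>0$ small enough and for all $\delta>0$, $$\sup_{\boldsymbol\theta\in\mathcal N_\eta}\frac1N\sum_{i=1}^N1\{\widehat k_i^{(K^0)}(\boldsymbol\theta)\neq k_i^0\}=o_p(T^{-\delta})$$ as $N,T\to\infty$.
   Context: Model: $y_{it}=x_{it}'\theta^0_{k_i^0}+\varepsilon_{it}$, $i\le N$, $t\le T$, random $x_{it}\in\mathbb{R}^p$, random $\varepsilon_{it}$, nonrandom $k_i^0\in[K^0]$, $\theta^0_k\in\Theta$, $G_k^0=\{i:k_i^0=k\}$, $N_k^0=|G_k^0|$. For $\boldsymbol\theta=(\theta_1,\dots,\theta_{K^0})$, $\widehat k_i^{(K^0)}(\boldsymbol\theta)=\arg\min_{k\in[K^0]}\sum_t(y_{it}-x_{it}'\theta_k)^2$. For $\eta>0$, $\mathcal N_\eta=\{\boldsymbol\theta\in\Theta^{K^0}:\|\theta_k-\theta_k^0\|^2<\eta\ \forall k\in[K^0]\}$. Assumption 1: $K^0$ fixed; $N_k^0=\tau_kN^{\alpha_k}$, $\tau_k$ bounded away from $0,\infty$, $\alpha_k\in[0,1]$, $N_k^0\ge1$, $\sum_kN_k^0=N$, $1=\alpha_1=\dots=\alpha_m>\alpha_{m+1}\ge\dots\ge\alpha_{K^0}\ge0$ for some $m\in[K^0-1]$. Assumption 2: constants $M,c>0$ with (a) $\Theta$ compact; (b) $E\|x_{it}\|^4\le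 M$; (c) $E\varepsilon_{it}=0$, $E\varepsilon_{it}^4\le M$; (d) $(NT)^{-1/2}\sum_{i,t}x_{it}\varepsilon_{it}=O_p(1)$; (e) with $\rho_{NT}(\boldsymbol\gamma_N,k,\tilde k)$ the minimum eigenvalue of $(N_k^0)^{-1}\sum_i1\{k_i^0=k\}1\{k_i=\tilde k\}T^{-1}\sum_tx_{it}x_{it}'$, some $\widehat\rho_{NT}\xrightarrow{p}\rho>0$ satisfies $\min_{\boldsymbol\gamma_N\in[K^0]^N}\max_{\tilde k}\rho_{NT}(\boldsymbol\gamma_N,k,\tilde k)\ge\widehat\rho_{NT}$ for all $k$, large $T$; (f) $\lambda_{\min}(T^{-1}\sum_tx_{it}x_{it}')\ge\widehat c_T$ for all $i$, large $T$, $\lim\widehat c_T>c$; (g) if $\alpha_{K^0}\ge1/2$, $N/T^\nu\to0$ for some $\nu>0$; if $\alpha_{K^0}<1/2$, $N^{1-2\alpha_{K^0}}/T\to0$; (h) $\|\theta^0_k-\theta^0_{\tilde k}\|>c$ for $k\ne\tilde k$; (i) $\sup_iP(T^{-1}\sum_t\|x_{it}\|^2\ge M)=o(T^{-\delta})$ for all $\delta>0$; (j) for each $\epsilon>0$, $\sup_iP(\|T^{-1}\sum_tx_{it}\varepsilon_{it}\|\ge\epsilon)=o(T^{-\delta})$ for all $\delta>0$; (k) $(NT)^{-1}\sum_{i,t}\varepsilon^2_{it}\xrightarrow{p}\sigma^2>0$. *)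

(* Defs.v *)
From mathcomp Require Import all_boot all_order all_algebra.
From mathcomp Require Import all_classical all_reals all_analysis.
Import Order.TTheory GRing.Theory Num.Theory numFieldNormedType.Exports.

Set Implicit Arguments.
Unset Strict Implicit.
Unset Printing Implicit Defensive.

Local Open Scope classical_set_scope.
Local Open Scope ring_scope.

Section Defs.
Variable R : realType.

Definition inner (p : nat) (a b : 'rV[R]_p) : R := \sum_(j < p) a 0 j * b 0 j.

Definition sqnorm (p : nat) (a : 'rV[R]_p) : R := \sum_(j < p) (a 0 j) ^+ 2.

Definition enorm (p : nat) (a : 'rV[R]_p) : R := Num.sqrt (sqnorm a).

Definition outer (p : nat) (a : 'rV[R]_p) : 'M[R]_p := a^T *m a.

(** "lambda_min(A) >= c" : every (real) eigenvalue of the (symmetric) matrix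
    A is at least c, i.e. the minimum eigenvalue of A is >= c. *)
Definition lambda_min_ge (p : nat) (A : 'M[R]_p) (c : R) : Prop :=
  forall a : R, eigenvalue A a -> c <= a.

Definition nat_to_infty (u : nat -> nat) : Prop :=
  forall B : nat, \forall n \near \oo, (B <= u n)%N.

Variables (d : measure_display) (Omega : measurableType d)
          (P : probability Omega R).

(** Outer-probability bound: the (possibly non-measurable) set S is contained
    in a measurable event of probability at most r.  For measurable S this is
    just P S <= r. *)
Definition outer_prob_le (S : set Omega) (r : R) : Prop :=
  exists A : set Omega, [/\ measurable A, S `<=` A & (P A <= r%:E)%E].

(** Z_n = o_p(1)  (convergence in (outer) probability to 0):
    for all e, r > 0, eventually P*(|Z_n| > e) <= r. *)
Definition op1 (Z : nat -> Omega -> R) : Prop :=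
  forall e r : R, 0 < e -> 0 < r ->
    \forall n \near \oo, outer_prob_le [set w | e < `|Z n w|] r.

Definition cvg_prob (Z : nat -> Omega -> R) (z : R) : Prop :=
  op1 (fun n w => Z n w - z).

Definition Op1 (Z : nat -> Omega -> R) : Prop :=
  forall r : R, 0 < r -> exists B : R,
    \forall n \near \oo, outer_prob_le [set w | B < `|Z n w|] r.

End Defs.

Section Model.
Variable R : realType.
Variables (d : measure_display) (Omega : measurableType d).
Variables (p K : nat) (N T : nat -> nat).

Definition group_size (k0 : forall n, 'I_(N n) -> 'I_K) (n : nat) (k : 'I_K) : nat :=
  #|[set i | k0 n i == k]|.

Definition yval (theta0 : 'I_K -> 'rV[R]_p)
  (k0 : forall n, 'I_(N n) -> 'I_K)
  (x : forall n, Omega -> 'I_(N n) -> 'I_(T n) -> 'rV[R]_p)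
  (eps : forall n, Omega -> 'I_(N n) -> 'I_(T n) -> R)
  (n : nat) (w : Omega) (i : 'I_(N n)) (t : 'I_(T n)) : R :=
  inner (x n w i t) (theta0 (k0 n i)) + eps n w i t.

(** hat k_i^{(K^0)}(theta) = argmin_k sum_t (y_it - x_it' theta_k)^2
    (ties broken towards the smallest group index). *)
Definition hatk (theta0 : 'I_K -> 'rV[R]_p)
  (k0 : forall n, 'I_(N n) -> 'I_K)
  (x : forall n, Omega -> 'I_(N n) -> 'I_(T n) -> 'rV[R]_p)
  (eps : forall n, Omega -> 'I_(N n) -> 'I_(T n) -> R)
  (n : nat) (w : Omega) (theta : 'I_K -> 'rV[R]_p) (i : 'I_(N n)) : 'I_K :=
  Order.arg_min (k0 n i) xpredT
    (fun k : 'I_K => \sum_(t < T n)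
        (yval theta0 k0 x eps w i t - inner (x n w i t) (theta k)) ^+ 2).

Definition misclass_frac (theta0 : 'I_K -> 'rV[R]_p)
  (k0 : forall n, 'I_(N n) -> 'I_K)
  (x : forall n, Omega -> 'I_(N n) -> 'I_(T n) -> 'rV[R]_p)
  (eps : forall n, Omega -> 'I_(N n) -> 'I_(T n) -> R)
  (n : nat) (w : Omega) (theta : 'I_K -> 'rV[R]_p) : R :=
  (N n)%:R^-1 *
    \sum_(i < N n) (hatk theta0 k0 x eps w theta i != k0 n i)%:R.

Definition nbhd_eta (Theta : set 'rV[R]_p) (theta0 : 'I_K -> 'rV[R]_p)
  (eta : R) (theta : 'I_K -> 'rV[R]_p) : Prop :=
  (forall k, Theta (theta k)) /\ (forall k, sqnorm (theta k - theta0 k) < eta).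

(** matrix of Assumption 2(e):
    (N_k^0)^{-1} sum_i 1{k_i^0 = k} 1{gamma_i = kt} T^{-1} sum_t x_it x_it' *)
Definition rho_mat (k0 : forall n, 'I_(N n) -> 'I_K)
  (x : forall n, Omega -> 'I_(N n) -> 'I_(T n) -> 'rV[R]_p)
  (n : nat) (w : Omega) (gamma : 'I_(N n) -> 'I_K) (k kt : 'I_K) : 'M[R]_p :=
  (group_size k0 n k)%:R^-1 *:
    \sum_(i < N n | (k0 n i == k) && (gamma i == kt))
       ((T n)%:R^-1 *: \sum_(t < T n) outer (x n w i t)).

End Model.

(* Main.v *)
Require Import Defs.
From mathcomp Require Import all_boot all_order all_algebra.
From mathcomp Require Import all_classical all_reals all_analysis.
From mathcomp Require Import ring lra zify.
Import Order.TTheory GRing.Theory Num.Theory numFieldNormedType.Exports.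
Local Open Scope classical_set_scope.
Local Open Scope ring_scope.

Set Implicit Arguments.
Unset Strict Implicit.


Section Lin.
Variable R : realType.
Variable p : nat.
Implicit Types a b u v w : 'rV[R]_p.

Lemma innerC a b : inner a b = inner b a.
Proof. by rewrite /inner; apply: eq_bigr => j _; rewrite mulrC. Qed.

Lemma innerDl a b u : inner (a + b) u = inner a u + inner b u.
Proof. by rewrite /inner -big_split; apply: eq_bigr => j _; rewrite mxE mulrDl. Qed.

Lemma innerZl (s : R) a u : inner (s *: a) u = s * inner a u.
Proof. by rewrite /inner mulr_sumr; apply: eq_bigr => j _; rewrite mxE mulrA. Qed.

Lemma innerNl a u : inner (- a) u = - inner a u.
Proof. by rewrite -scaleN1r innerZl mulN1r. Qed.

Lemma innerBl a b u : inner (a - b) u = inner a u - inner b u.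
Proof. by rewrite innerDl innerNl. Qed.

Lemma innerDr a b u : inner u (a + b) = inner u a + inner u b.
Proof. by rewrite !(innerC u) innerDl. Qed.

Lemma innerZr (s : R) a u : inner u (s *: a) = s * inner u a.
Proof. by rewrite !(innerC u) innerZl. Qed.

Lemma innerBr a b u : inner u (a - b) = inner u a - inner u b.
Proof. by rewrite !(innerC u) innerBl. Qed.

Lemma sqnormE a : sqnorm a = inner a a.
Proof. by rewrite /sqnorm /inner; apply: eq_bigr => j _; rewrite expr2. Qed.

Lemma sqnorm_ge0 a : 0 <= sqnorm a.
Proof. by rewrite /sqnorm; apply: sumr_ge0 => j _; rewrite sqr_ge0. Qed.

Lemma sqnormD a b : sqnorm (a + b) = sqnorm a + 2 * inner a b + sqnorm b.
Proof.
rewrite !sqnormE !innerDl !innerDr (innerC b a); ring.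
Qed.

Lemma sqnormB a b : sqnorm (a - b) = sqnorm a - 2 * inner a b + sqnorm b.
Proof.
rewrite !sqnormE !innerBl !innerBr (innerC b a); ring.
Qed.

Lemma sqnormZ (s : R) a : sqnorm (s *: a) = s ^+ 2 * sqnorm a.
Proof. by rewrite !sqnormE innerZl innerZr mulrA expr2. Qed.

Lemma amgm a b (l : R) : l * (2 * inner a b) <= sqnorm a + l ^+ 2 * sqnorm b.
Proof.
have := sqnorm_ge0 (a - l *: b).
rewrite sqnormB sqnormZ innerZr => h; lra.
Qed.

Lemma sqnormD_le a b : sqnorm (a + b) <= 2 * sqnorm a + 2 * sqnorm b.
Proof.
have := sqnorm_ge0 (a - b).
rewrite sqnormB sqnormD => h; lra.
Qed.

Lemma CS a b : inner a b ^+ 2 <= sqnorm a * sqnorm b.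
Proof.
have [b0|bpos] := eqVneq (sqnorm b) 0.
  have hb : b = 0.
    apply/rowP => j; rewrite mxE; apply/eqP; rewrite -sqrf_eq0; apply/eqP.
    apply/eqP; rewrite eq_le sqr_ge0 andbT -b0 /sqnorm.
    by rewrite (bigD1 j) //= lerDl sumr_ge0 // => k _; rewrite sqr_ge0.
  rewrite hb (_ : inner a 0 = 0) ?expr0n ?mulr_ge0 ?sqnorm_ge0 //.
  by rewrite /inner big1 // => j _; rewrite mxE mulr0.
have hb : 0 < sqnorm b by rewrite lt0r bpos sqnorm_ge0.
have := sqnorm_ge0 (a - (inner a b / sqnorm b) *: b).
rewrite sqnormB sqnormZ innerZr => h.
have : 0 <= sqnorm b * (sqnorm a - 2 * (inner a b / sqnorm b * inner a b) +
        (inner a b / sqnorm b) ^+ 2 * sqnorm b) by rewrite mulr_ge0 // ltW.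
set q := inner a b => h2.
have e : sqnorm b * (sqnorm a - 2 * (q / sqnorm b * q) + (q / sqnorm b) ^+ 2 * sqnorm b)
  = sqnorm b * sqnorm a - q ^+ 2.
  by field; rewrite bpos.
rewrite e in h2; lra.
Qed.

End Lin.


Section Lin2.
Variable R : realType.
Variable p : nat.
Implicit Types a b u v w : 'rV[R]_p.
Implicit Types A B : 'M[R]_p.

Definition bf A u v : R := (u *m A *m v^T) 0 0.

Lemma innerM u v : inner u v = (u *m v^T) 0 0.
Proof. by rewrite mxE /inner; apply: eq_bigr => j _; rewrite mxE. Qed.

Lemma bfE A u v : bf A u v = \sum_i \sum_j u 0 i * A i j * v 0 j.
Proof.
rewrite /bf mxE [RHS]exchange_big /=; apply: eq_bigr => j _.
rewrite [X in X * _]mxE [X in _ * X]mxE mulr_suml; apply: eq_bigr => i _.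
by [].
Qed.

Lemma bfDl A u v w : bf A (u + v) w = bf A u w + bf A v w.
Proof. by rewrite /bf !mulmxDl mxE. Qed.
Lemma bfZl A (s : R) u w : bf A (s *: u) w = s * bf A u w.
Proof. by rewrite /bf -!scalemxAl mxE. Qed.
Lemma bfDr A u v w : bf A w (u + v) = bf A w u + bf A w v.
Proof. by rewrite /bf linearD /= mulmxDr mxE. Qed.
Lemma bfZr A (s : R) u w : bf A w (s *: u) = s * bf A w u.
Proof. by rewrite /bf linearZ /= -scalemxAr mxE. Qed.
Lemma bfMD A B u v : bf (A + B) u v = bf A u v + bf B u v.
Proof. by rewrite /bf mulmxDr mulmxDl mxE. Qed.
Lemma bfMZ A (s : R) u v : bf (s *: A) u v = s * bf A u v.
Proof. by rewrite /bf -scalemxAr -scalemxAl mxE. Qed.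
Lemma bfMN A u v : bf (- A) u v = - bf A u v.
Proof. by rewrite -scaleN1r bfMZ mulN1r. Qed.
Lemma bf_sum (I : finType) (F : I -> 'M[R]_p) u v :
  bf (\sum_i F i) u v = \sum_i bf (F i) u v.
Proof. by rewrite /bf mulmx_sumr mulmx_suml summxE. Qed.
Lemma bf_scalar (s : R) u v : bf s%:M u v = s * inner u v.
Proof. by rewrite /bf mul_mx_scalar -scalemxAl mxE innerM. Qed.
Lemma bf_sym A u v : A^T = A -> bf A u v = bf A v u.
Proof.
move=> hA; rewrite /bf -[in LHS]hA.
have -> : u *m A^T *m v^T = (v *m A *m u^T)^T by rewrite !trmx_mul trmxK mulmxA.
by rewrite mxE.
Qed.
Lemma bf_outer a u : bf (outer a) u u = inner a u ^+ 2.
Proof.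
rewrite /bf /outer !mulmxA -(mulmxA _ a) mxE big_ord1 -innerM.
rewrite expr2; congr (_ * _).
  by rewrite innerC innerM.
by rewrite innerM.
Qed.

Lemma sq_le_sqnorm u i : u 0 i ^+ 2 <= sqnorm u.
Proof.
by rewrite /sqnorm (bigD1 i) //= lerDl sumr_ge0 // => k _; rewrite sqr_ge0.
Qed.

Lemma bf_abs A u : `|bf A u u| <= (\sum_i \sum_j `|A i j|) * sqnorm u.
Proof.
rewrite bfE mulr_suml; apply: (le_trans (ler_norm_sum _ _ _)).
apply: ler_sum => i _; rewrite mulr_suml; apply: (le_trans (ler_norm_sum _ _ _)).
apply: ler_sum => j _.
rewrite !normrM mulrAC mulrC ler_wpM2l //.
have h1 := sq_le_sqnorm u i; have h2 := sq_le_sqnorm u j.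
have := sqr_ge0 (`|u 0 i| - `|u 0 j|).
rewrite -(real_normK (num_real (u 0 i))) in h1.
rewrite -(real_normK (num_real (u 0 j))) in h2.
move=> h3; nra.
Qed.


Lemma bf_uu u : bf 1%:M u u = sqnorm u.
Proof. by rewrite bf_scalar mul1r sqnormE. Qed.

Lemma eig_qf A (c0 : R) : A^T = A -> lambda_min_ge A c0 ->
  forall u, c0 * sqnorm u <= bf A u u.
Proof.
move=> Asym Hl u.
have [p0|pgt0] := posnP p.
  have e1 : sqnorm u = 0.
    by rewrite /sqnorm big1 // => -[i hi]; exfalso; move: hi; rewrite p0.
  have e2 : bf A u u = 0.
    by rewrite bfE big1 // => -[i hi]; exfalso; move: hi; rewrite p0.
  by rewrite e1 e2 mulr0.
pose S := [set s : R | forall v, s * sqnorm v <= bf A v v].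
pose K0 := \sum_i \sum_j `|A i j|.
have hS0 : S (- K0).
  move=> v /=; have := bf_abs A v; rewrite ler_norml => /andP[h _].
  by rewrite mulNr.
pose i0 : 'I_p := Ordinal pgt0.
have hub : has_ubound S.
  exists (A i0 i0) => s /= /(_ (delta_mx 0 i0)).
  have -> : sqnorm (delta_mx 0 i0 : 'rV[R]_p) = 1.
    by rewrite sqnormE innerM trmx_delta mul_delta_mx mxE !eqxx.
  have -> : bf A (delta_mx 0 i0) (delta_mx 0 i0) = A i0 i0.
    by rewrite /bf -rowE trmx_delta -colE !mxE.
  by rewrite mulr1.
pose s0 := sup S.
have hsS : S s0.
  move=> v; have [n0|npos] := eqVneq (sqnorm v) 0.
    by rewrite n0 mulr0; have := hS0 v; rewrite n0 mulr0.
  have hn : 0 < sqnorm v by rewrite lt0r npos sqnorm_ge0.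
  rewrite -ler_pdivlMr //; apply: ge_sup; first by exists (- K0).
  by move=> s hs; rewrite ler_pdivlMr //; exact: hs.
have hBE : forall z, bf (A - s0%:M) z z = bf A z z - s0 * sqnorm z.
  by move=> z; rewrite bfMD bfMN bf_scalar sqnormE.
have hpsd : forall z, 0 <= bf (A - s0%:M) z z.
  by move=> z; rewrite hBE subr_ge0; exact: hsS.
have [Bu|Bnu] := boolP (A - s0%:M \in unitmx).
  exfalso.
  set B := A - s0%:M.
  have Bsym : B^T = B by rewrite /B linearB /= tr_scalar_mx Asym.
  pose Bi := invmx B.
  have Bisym : Bi^T = Bi by rewrite /Bi trmx_inv Bsym.
  pose K := \sum_i \sum_j `|Bi i j| + 1.
  have K0pos : 0 <= \sum_i \sum_j `|Bi i j|.
    by apply: sumr_ge0 => i _; apply: sumr_ge0 => j _.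
  have Kpos : 0 < K by rewrite /K; lra.
  have hS2 : S (s0 + K^-1).
    move=> v; pose w := v *m Bi; pose t := K^-1.
    have h0 := hpsd (v + (- t) *: w).
    rewrite bfDl !bfDr !bfZl !bfZr in h0.
    have e1 : bf B v w = sqnorm v.
      rewrite /bf /w trmx_mul Bisym !mulmxA -(mulmxA v B) mulmxV // mulmx1.
      by rewrite -innerM sqnormE.
    have e2 : bf B w v = sqnorm v by rewrite bf_sym // e1.
    have e3 : bf B w w = bf Bi v v.
      rewrite /bf /w trmx_mul Bisym !mulmxA -(mulmxA v Bi B) mulVmx // mulmx1.
      by [].
    rewrite e1 e2 e3 in h0.
    have hq := bf_abs Bi v; rewrite ler_norml in hq; case/andP: hq => _ hq.
    have tK : t * K = 1 by rewrite /t mulVf // gt_eqF.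
    have tpos : 0 < t by rewrite /t invr_gt0.
    have h4 : t * t * bf Bi v v <= t * sqnorm v.
      have := ler_wpM2l (ltW (mulr_gt0 tpos tpos)) hq.
      move=> h; apply: (le_trans h).
      have -> : t * t * ((\sum_i \sum_j `|Bi i j|) * sqnorm v) =
                t * (t * (K - 1)) * sqnorm v by rewrite /K; ring.
      rewrite -mulrA ler_wpM2l ?(ltW tpos) // mulrBr tK mulr1.
      have := sqnorm_ge0 v; nra.
    have := hBE v; rewrite -/B => h5.
    move: h0 h4 h5; rewrite /t; set q := bf Bi v v; set n := sqnorm v.
    set bB := bf B v v; set bA := bf A v v => h0 h4 h5.
    nra.
  have := ub_le_sup hub hS2; rewrite -/s0 gerDl => h.
  have : 0 < K^-1 by rewrite invr_gt0.
  by rewrite ltNge h.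
have ev : eigenvalue A s0.
  by rewrite /eigenvalue /eigenspace kermx_eq0 row_free_unit.
have hc := Hl _ ev.
apply: le_trans (hsS u).
by rewrite ler_wpM2r // sqnorm_ge0.
Qed.

End Lin2.


Section Core.
Variable R : realType.
Variable p : nat.

Lemma inner_sum (I : finType) (f : I -> 'rV[R]_p) u :
  inner (\sum_i f i) u = \sum_i inner (f i) u.
Proof.
rewrite innerM mulmx_suml summxE; apply: eq_bigr => i _; by rewrite innerM.
Qed.

Lemma sqnormN (a : 'rV[R]_p) : sqnorm (- a) = sqnorm a.
Proof. by rewrite -scaleN1r sqnormZ sqrrN expr1n mul1r. Qed.

Lemma Gid (Tn : nat) (x : 'I_Tn -> 'rV[R]_p) (e : 'I_Tn -> R) (th0 th : 'rV[R]_p) :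
  (0 < Tn)%N ->
  \sum_t (inner (x t) th0 + e t - inner (x t) th) ^+ 2 =
  \sum_t e t ^+ 2 +
  2 * Tn%:R * inner (Tn%:R^-1 *: \sum_t (e t *: x t)) (th0 - th) +
  Tn%:R * bf (Tn%:R^-1 *: \sum_t outer (x t)) (th0 - th) (th0 - th).
Proof.
move=> Tpos.
have Tr : Tn%:R != 0 :> R by rewrite pnatr_eq0 -lt0n.
rewrite innerZl bfMZ !mulrA -(mulrA 2) !mulfV // mulr1 mul1r.
rewrite inner_sum bf_sum mulr_sumr -!big_split /=; apply: eq_bigr => t _.
rewrite bf_outer innerZl -[inner (x t) th0 + _ - _]addrAC -innerBr.
rewrite (innerC (x t)); ring.
Qed.

Lemma outer_sym (Tn : nat) (x : 'I_Tn -> 'rV[R]_p) :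
  (Tn%:R^-1 *: \sum_t outer (x t))^T = Tn%:R^-1 *: \sum_t outer (x t).
Proof.
rewrite linearZ /= linear_sum /=; congr (_ *: _); apply: eq_bigr => t _.
by rewrite /outer trmx_mul trmxK.
Qed.

Lemma core (Tn : nat) (x : 'I_Tn -> 'rV[R]_p) (e : 'I_Tn -> R)
  (th0g th0k thg thk : 'rV[R]_p) (c M eta ch : R) :
  (0 < Tn)%N -> 0 < c -> 0 < M -> 0 < eta -> eta * (8 * (c + M)) < c ^+ 3 ->
  c <= ch -> lambda_min_ge (Tn%:R^-1 *: \sum_t outer (x t)) ch ->
  ~ (M <= Tn%:R^-1 * \sum_t sqnorm (x t)) ->
  ~ (c ^+ 2 / 8 <= enorm (Tn%:R^-1 *: \sum_t (e t *: x t))) ->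
  sqnorm (thg - th0g) < eta -> sqnorm (thk - th0k) < eta ->
  c < enorm (th0g - th0k) ->
  \sum_t (inner (x t) th0g + e t - inner (x t) thg) ^+ 2 <
  \sum_t (inner (x t) th0g + e t - inner (x t) thk) ^+ 2.
Proof.
move=> Tpos cpos Mpos etapos heta hch hlam hM hep hg hk hd.
rewrite !Gid //.
set A := Tn%:R^-1 *: \sum_t outer (x t).
set s := Tn%:R^-1 *: \sum_t (e t *: x t).
set a := th0g - thk; set b := th0g - thg.
have Trpos : 0 < Tn%:R :> R by rewrite ltr0n.
suff : 2 * inner s b + bf A b b < 2 * inner s a + bf A a a.
  move=> h; move: h; rewrite -(ltr_pM2l Trpos) => h; lra.
have hqa : c * sqnorm a <= bf A a a.
  apply: le_trans (eig_qf (outer_sym x) hlam a).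
  by rewrite ler_wpM2r // sqnorm_ge0.
have hqb : bf A b b <= M * sqnorm b.
  rewrite /A bfMZ bf_sum.
  have hS : Tn%:R^-1 * \sum_t sqnorm (x t) < M by rewrite ltNge; apply/negP.
  apply: le_trans (_ : Tn%:R^-1 * (\sum_t sqnorm (x t)) * sqnorm b <= _).
    rewrite -mulrA ler_wpM2l ?invr_ge0 ?ler0n // mulr_suml.
    by apply: ler_sum => t _; rewrite bf_outer CS.
  by rewrite ler_wpM2r ?sqnorm_ge0 // ltW.
have hs : sqnorm s < (c ^+ 2 / 8) ^+ 2.
  have : enorm s < c ^+ 2 / 8 by rewrite ltNge; apply/negP.
  rewrite /enorm => h.
  have h0 := sqrtr_ge0 (sqnorm s).
  rewrite -(sqr_sqrtr (sqnorm_ge0 s)).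
  by rewrite ltr_pXn2r // nnegrE // ltW // (le_lt_trans h0 h).
have hdd : c ^+ 2 < sqnorm (th0g - th0k).
  move: hd; rewrite /enorm => h.
  rewrite -(sqr_sqrtr (sqnorm_ge0 (th0g - th0k))).
  by rewrite ltr_pXn2r // nnegrE // ltW // (lt_trans cpos h).
have hda : sqnorm (th0g - th0k) <= 2 * sqnorm a + 2 * sqnorm (thk - th0k).
  have -> : th0g - th0k = a + (thk - th0k) by rewrite /a; rewrite addrA addrNK.
  exact: sqnormD_le.
have hb : sqnorm b < eta by rewrite /b -opprB sqnormN.
have hZ : sqnorm (b - a) <= 2 * sqnorm b + 2 * sqnorm a.
  by have := sqnormD_le b (- a); rewrite sqnormN.
have hI := amgm s (b - a) (c / 4).
rewrite innerBr in hI.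
move: hqa hqb hs hdd hda hb hZ hI hk.
set X := sqnorm a; set Y := sqnorm b; set Z := sqnorm (b - a).
set Ss := sqnorm s; set D := sqnorm (th0g - th0k); set E := sqnorm (thk - th0k).
set Ia := inner s a; set Ib := inner s b; set qa := bf A a a; set qb := bf A b b.
move=> hqa hqb hs hdd hda hb hZ hI hk.
have X0 : 0 <= X by apply: sqnorm_ge0.
have Y0 : 0 <= Y by apply: sqnorm_ge0.
have c2pos : 0 < c ^+ 2 by rewrite exprn_gt0.
have f1 : c * qb <= c * (M * Y) by rewrite ler_pM2l.
have f2 : c * (c * X) <= c * qa by rewrite ler_pM2l.
have f3 : c ^+ 2 * Z <= c ^+ 2 * (2 * Y + 2 * X) by rewrite ler_pM2l.
have f4 : c * M * Y <= c * M * eta by rewrite ler_pM2l ?mulr_gt0 // ltW.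
have f5 : c ^+ 2 * Y <= c ^+ 2 * eta by rewrite ler_pM2l // ltW.
have f6 : c ^+ 2 * c ^+ 2 < c ^+ 2 * (2 * X + 2 * eta).
  by rewrite ltr_pM2l //; lra.
have f7 : c * (eta * (8 * (c + M))) < c * c ^+ 3 by rewrite ltr_pM2l.
suff : c * (2 * Ib + qb) < c * (2 * Ia + qa) by rewrite ltr_pM2l.
move: hI f1 f2 f3 f4 f5 f6 f7 hs.
rewrite ?exprS ?expr0 ?mulr1 => hI f1 f2 f3 f4 f5 f6 f7 hs.
nra.
Qed.

End Core.


Section Prob.
Variable R : realType.
Variables (d : measure_display) (Omega : measurableType d) (P : probability Omega R).

Lemma meas_ge (f : Omega -> R) (a : R) :
  measurable_fun setT f -> measurable [set w | a <= f w].
Proof.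
move=> mf; have := mf measurableT _ (measurable_itv `[a, +oo[).
rewrite setTI; congr measurable; apply/seteqP; split => w /=;
  by rewrite in_itv /= andbT.
Qed.

Lemma union_bound (I : Type) (s : seq I) (F : I -> set Omega) :
  (forall i, measurable (F i)) ->
  measurable (\big[setU/set0]_(i <- s) F i) /\
  (P (\big[setU/set0]_(i <- s) F i) <= \sum_(i <- s) P (F i))%E.
Proof.
move=> mF; elim: s => [|i s [ms hs]].
  by rewrite !big_nil measure0; split.
rewrite !big_cons; split; first exact: measurableU.
apply: le_trans (measureU2 _ _ _) _ => //.
by apply: leeD.
Qed.

Lemma mem_bigsetU (I : eqType) (s : seq I) (F : I -> set Omega) i w :
  i \in s -> F i w -> (\big[setU/set0]_(j <- s) F j) w.
Proof.
elim: s => // j s IH; rewrite in_cons big_cons => /orP[/eqP <-|hi] hw.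
  by left.
by right; apply: IH.
Qed.

Lemma ediv_le (y : \bar R) (a b : R) : 0 < a -> (0 <= y)%E ->
  (a%:E * y <= b%:E)%E -> (y <= (b / a)%:E)%E.
Proof.
move=> apos; case: y => [y| |] // y0.
  by rewrite -EFinM !lee_fin ler_pdivlMr // mulrC.
by rewrite mulry gtr0_sg // mul1e leye_eq.
Qed.

Lemma meas_sqnorm p (f : Omega -> 'rV[R]_p) :
  (forall j, measurable_fun setT (fun w => f w 0 j)) ->
  measurable_fun setT (fun w => sqnorm (f w)).
Proof.
move=> mf; rewrite /sqnorm; apply: measurable_sum => j.
exact: measurable_realfun.measurable_funX.
Qed.

End Prob.

Unset Implicit Arguments.
Set Strict Implicit.


Lemma argmin_le (R : realType) (K' : finType) (i0 : K') (F : K' -> R) :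
  forall j, F (Order.arg_min i0 xpredT F) <= F j.
Proof. by move=> j; case: arg_minP => // k _ h; exact: h. Qed.

Lemma le_sqrt_sq (R : realType) (a q : R) : 0 < a -> 0 <= q ->
  (a <= Num.sqrt q) = (a ^+ 2 <= q).
Proof.
move=> a0 q0; rewrite -[in RHS](sqr_sqrtr q0) ler_pXn2r // nnegrE.
  exact: ltW.
exact: sqrtr_ge0.
Qed.

Theorem lemmaA3
  (R : realType) (d : measure_display) (Omega : measurableType d)
  (P : probability Omega R)
  (p K : nat) (N T : nat -> nat)
  (Theta : set 'rV[R]_p) (theta0 : 'I_K -> 'rV[R]_p)
  (k0 : forall n, 'I_(N n) -> 'I_K)
  (x : forall n, Omega -> 'I_(N n) -> 'I_(T n) -> 'rV[R]_p)
  (eps : forall n, Omega -> 'I_(N n) -> 'I_(T n) -> R)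
  (alpha : 'I_K -> R) (M c rho sigma2 : R)
  (rhohat : nat -> Omega -> R) (chat : nat -> R)
  (* N, T -> oo *)
  (HN : nat_to_infty N) (HT : nat_to_infty T)
  (* random regressors and errors *)
  (Hxmeas : forall n i t (j : 'I_p),
      measurable_fun setT (fun w => x n w i t 0 j))
  (Hemeas : forall n i t, measurable_fun setT (fun w => eps n w i t))
  (* Assumption 1 *)
  (Halpha01 : forall k, 0 <= alpha k <= 1)
  (Halpha_mono : forall k l : 'I_K, (k <= l)%N -> alpha l <= alpha k)
  (Halpha_m : exists m : nat, [/\ (1 <= m)%N, (m <= K - 1)%N &
      forall k : 'I_K, ((k < m)%N -> alpha k = 1) /\ ((m <= k)%N -> alpha k < 1)])
  (HNk_pos : forall n k, (1 <= group_size k0 n k)%N)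
  (Htau : exists tlo thi : R, [/\ 0 < tlo, tlo <= thi &
      forall n k, tlo * (N n)%:R `^ alpha k <= (group_size k0 n k)%:R
                  <= thi * (N n)%:R `^ alpha k])
  (* Assumption 2 *)
  (HM : 0 < M) (Hc : 0 < c)
  (Ha_compact : compact Theta) (Ha_in : forall k, Theta (theta0 k))
  (Hb : forall n i t, (\int[P]_w ((sqnorm (x n w i t)) ^+ 2)%:E <= M%:E)%E)
  (Hc_mean : forall n i t, (\int[P]_w (eps n w i t)%:E = 0)%E)
  (Hc_4 : forall n i t, (\int[P]_w ((eps n w i t) ^+ 4)%:E <= M%:E)%E)
  (Hd : Op1 P (fun n w => enorm
      (((N n * T n)%:R `^ (- (1 / 2))) *:
         \sum_(i < N n) \sum_(t < T n) (eps n w i t *: x n w i t))))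
  (He_rho : 0 < rho) (He_cvg : cvg_prob P rhohat rho)
  (He : \forall n \near \oo, forall (w : Omega) (k : 'I_K)
      (gamma : 'I_(N n) -> 'I_K), exists kt : 'I_K,
        lambda_min_ge (rho_mat k0 x w gamma k kt) (rhohat n w))
  (Hf : \forall n \near \oo, forall (w : Omega) (i : 'I_(N n)),
      lambda_min_ge ((T n)%:R^-1 *: \sum_(t < T n) outer (x n w i t)) (chat n))
  (Hf_lim : exists cbar : R, c < cbar /\ chat @ \oo --> cbar)
  (Hg : forall kK : 'I_K, (kK.+1 = K)%N ->
      (1 / 2 <= alpha kK ->
         exists nu : R, 0 < nu /\
           (fun n => (N n)%:R / (T n)%:R `^ nu) @ \oo --> 0) /\
      (alpha kK < 1 / 2 ->
           (fun n => (N n)%:R `^ (1 - 2 * alpha kK) / (T n)%:R) @ \oo --> 0))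
  (Hh : forall k kt : 'I_K, k != kt -> c < enorm (theta0 k - theta0 kt))
  (Hi : forall delta e : R, 0 < delta -> 0 < e ->
      \forall n \near \oo, forall i : 'I_(N n),
        (((T n)%:R `^ delta)%:E *
          P [set w | (M <= (T n)%:R^-1 * \sum_(t < T n) sqnorm (x n w i t))%R]
         <= e%:E)%E)
  (Hj : forall ep delta e : R, 0 < ep -> 0 < delta -> 0 < e ->
      \forall n \near \oo, forall i : 'I_(N n),
        (((T n)%:R `^ delta)%:E *
          P [set w | (ep <= enorm ((T n)%:R^-1 *:
                               \sum_(t < T n) (eps n w i t *: x n w i t)))%R]
         <= e%:E)%E)
  (Hk_pos : 0 < sigma2)
  (Hk : cvg_prob P (fun n w => (N n * T n)%:R^-1 *
                     \sum_(i < N n) \sum_(t < T n) (eps n w i t) ^+ 2) sigma2) :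
  exists eta0 : R, 0 < eta0 /\
    forall eta delta : R, 0 < eta -> eta < eta0 -> 0 < delta ->
      (* T^delta * sup_{theta in N_eta} N^{-1} sum_i 1{hat k_i(theta) <> k_i^0}
         = o_p(1); the event {sup > e} is written as {exists theta, ... > e} *)
      forall e r : R, 0 < e -> 0 < r ->
        \forall n \near \oo, outer_prob_le P
          [set w | exists theta : 'I_K -> 'rV[R]_p,
             nbhd_eta Theta theta0 eta theta /\
             e < (T n)%:R `^ delta * misclass_frac theta0 k0 x eps n w theta] r.
Proof.
have [cbar [ccbar chcv]] := Hf_lim.
have cMpos : 0 < 8 * (c + M) by rewrite mulr_gt0 ?addr_gt0.
exists (c ^+ 3 / (8 * (c + M))); split; first by rewrite divr_gt0 ?exprn_gt0.
move=> eta delta etapos etalt deltapos e r epos rpos.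
have heta : eta * (8 * (c + M)) < c ^+ 3 by rewrite -ltr_pdivlMr.
have [nu [nupos hnu]] : exists nu : R, 0 < nu /\
    \forall n \near \oo, (N n)%:R <= (T n)%:R `^ nu.
  have [m [m1 mK _]] := Halpha_m.
  have hK : (K.-1 < K)%N by lia.
  pose kK : 'I_K := Ordinal hK.
  have hkK : (kK.+1 = K)%N by rewrite /= prednK //; lia.
  have [hg1 hg2] := Hg kK hkK.
  have HT1 := HT 1%N.
  case: (leP (1 / 2) (alpha kK)) => ha.
    have [nu [nupos hcv]] := hg1 ha; exists nu; split => //.
    have hlt1 := cvgr_lt 0 hcv 1 ltr01.
    near=> n.
    have Tp : (0 < T n)%N by near: n; exact: HT1.
    have : (N n)%:R / (T n)%:R `^ nu < 1 by near: n; exact: hlt1.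
    by rewrite ltr_pdivrMr ?mul1r ?powR_gt0 ?ltr0n // => /ltW.
  have hcv := hg2 ha.
  have bpos : 0 < 1 - 2 * alpha kK by lra.
  exists (1 - 2 * alpha kK)^-1; split; first by rewrite invr_gt0.
  have hlt1 := cvgr_lt 0 hcv 1 ltr01.
  near=> n.
  have Tp : (0 < T n)%N by near: n; exact: HT1.
  have h : (N n)%:R `^ (1 - 2 * alpha kK) / (T n)%:R < 1 by near: n; exact: hlt1.
  rewrite ltr_pdivrMr ?ltr0n // mul1r in h.
  have -> : (N n)%:R = ((N n)%:R `^ (1 - 2 * alpha kK)) `^ (1 - 2 * alpha kK)^-1.
    by rewrite -powRrM mulfV ?gt_eqF // powRr1 // ler0n.
  apply: ge0_ler_powR; first by rewrite invr_ge0 ltW.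
  - by rewrite nnegrE powR_ge0.
  - by rewrite nnegrE ler0n.
  - exact: ltW.
pose ep := c ^+ 2 / 8.
have eppos : 0 < ep by rewrite /ep divr_gt0 ?exprn_gt0.
have r2pos : 0 < r / 2 by rewrite divr_gt0.
have Hi' := Hi nu (r / 2) nupos r2pos.
have Hj' := Hj ep nu (r / 2) eppos nupos r2pos.
have Hch := cvgr_gt cbar chcv c ccbar.
have HT1 := HT 1%N.
near=> n.
have Tpos : (0 < T n)%N by near: n; exact: HT1.
have hch : c < chat n by near: n; exact: Hch.
have hlam : forall (w : Omega) (i : 'I_(N n)),
   lambda_min_ge ((T n)%:R^-1 *: \sum_(t < T n) outer (x n w i t)) (chat n).
  by near: n; exact: Hf.
have hNT : (N n)%:R <= (T n)%:R `^ nu by near: n; exact: hnu.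
have hi : forall i : 'I_(N n),
        (((T n)%:R `^ nu)%:E *
          P [set w | (M <= (T n)%:R^-1 * \sum_(t < T n) sqnorm (x n w i t))%R]
         <= (r / 2)%:E)%E by near: n; exact: Hi'.
have hj : forall i : 'I_(N n),
        (((T n)%:R `^ nu)%:E *
          P [set w | (ep <= enorm ((T n)%:R^-1 *:
                               \sum_(t < T n) (eps n w i t *: x n w i t)))%R]
         <= (r / 2)%:E)%E by near: n; exact: Hj'.
pose B1 (i : 'I_(N n)) := [set w | (M <= (T n)%:R^-1 * \sum_(t < T n) sqnorm (x n w i t))%R].
pose B2 (i : 'I_(N n)) := [set w | (ep <= enorm ((T n)%:R^-1 *:
                               \sum_(t < T n) (eps n w i t *: x n w i t)))%R].
have mB1 : forall i, measurable (B1 i).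
  move=> i; apply: meas_ge; apply: measurable_realfun.measurable_funM.
    exact: measurable_cst.
  apply: measurable_sum => t; apply: meas_sqnorm => j; exact: Hxmeas.
have mB2 : forall i, measurable (B2 i).
  move=> i.
  have -> : B2 i = [set w | ep ^+ 2 <= sqnorm ((T n)%:R^-1 *:
                               \sum_(t < T n) (eps n w i t *: x n w i t))].
    apply/seteqP; split => w; rewrite /B2 /= /enorm le_sqrt_sq // sqnorm_ge0 //.
  apply: meas_ge; apply: meas_sqnorm => j.
  have -> : (fun w => ((T n)%:R^-1 *: \sum_(t < T n) (eps n w i t *: x n w i t)) 0 j)
     = (fun w => (T n)%:R^-1 * \sum_(t < T n) (eps n w i t * x n w i t 0 j)).
    apply/funext => w; rewrite mxE summxE; congr (_ * _).
    by apply: eq_bigr => t _; rewrite mxE.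
  apply: measurable_realfun.measurable_funM; first exact: measurable_cst.
  apply: measurable_sum => t; apply: measurable_realfun.measurable_funM.
    exact: Hemeas.
  exact: Hxmeas.
have [mU hU] := @union_bound _ _ _ P _ (index_enum 'I_(N n)) (fun i => B1 i `|` B2 i)
  (fun i => measurableU _ _ (mB1 i) (mB2 i)).
exists (\big[setU/set0]_(i < N n) (B1 i `|` B2 i)); split => //.
- move=> w /= [theta [[hTh hth] hlt]].
  case: (pselect (exists i : 'I_(N n), B1 i w \/ B2 i w)) => [[i hiw]|hno].
    by apply: (mem_bigsetU (i := i)) => //; rewrite mem_index_enum.
  exfalso.
  have h0 : misclass_frac theta0 k0 x eps n w theta = 0.
    rewrite /misclass_frac big1 ?mulr0 // => i _.
    have hi1 : ~ B1 i w by move=> h; apply: hno; exists i; left.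
    have hi2 : ~ B2 i w by move=> h; apply: hno; exists i; right.
    rewrite /hatk.
    set k := Order.arg_min _ _ _.
    have hmin : forall j, \sum_(t < T n)
       (yval theta0 k0 x eps w i t - inner (x n w i t) (theta k)) ^+ 2 <=
       \sum_(t < T n)
       (yval theta0 k0 x eps w i t - inner (x n w i t) (theta j)) ^+ 2.
      by move=> j; exact: (@argmin_le _ _ (k0 n i) (fun k => \sum_(t < T n)
       (yval theta0 k0 x eps w i t - inner (x n w i t) (theta k)) ^+ 2) j).
    clearbody k; case: eqP => [//|/eqP hk].
    exfalso; have := hmin (k0 n i); apply/negP; rewrite -ltNge /yval.
    apply: (core Tpos Hc HM etapos heta (ltW hch) (hlam w i) hi1 hi2
             (hth (k0 n i)) (hth k)).
    by apply: Hh; rewrite eq_sym.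
  by move: hlt; rewrite h0 mulr0 => /(lt_trans epos); rewrite ltxx.
- apply: le_trans hU _.
  have Tnupos : 0 < (T n)%:R `^ nu by rewrite powR_gt0 // ltr0n.
  apply: (@le_trans _ _ (\sum_(i < N n) ((r / (T n)%:R `^ nu))%:E)%E).
    apply: lee_sum => i _.
    apply: le_trans (measureU2 _ (mB1 i) (mB2 i)) _.
    have h1 := ediv_le Tnupos (measure_ge0 _ _) (hi i).
    have h2 := ediv_le Tnupos (measure_ge0 _ _) (hj i).
    apply: le_trans (leeD h1 h2) _.
    by rewrite -EFinD lee_fin -mulrDl -splitr.
  rewrite sumEFin lee_fin big_const_ord iter_addr addr0 -[_ *+ N n]mulr_natl.
  by rewrite mulrA ler_pdivrMr // mulrC ler_pM2l.
Unshelve. all: end_near.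
Qed.
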